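(* Let $q$ be a prime power, $m\ge1$, and let $\mathcal{A}=\{\alpha^{[0]},\alpha^{[1]},\dots,\alpha^{[m-1]}\}$ be a normal basis of $\mathbb{F}_{q^m}$ over $\mathbb{F}_q$ with dual basis $\mathcal{A}'=\{\alpha'_0,\dots,\alpha'_{m-1}\}$. Let $\mathcal{B}$ be any ordered basis of $\mathbb{F}_{q^m}$ over $\mathbb{F}_q$. Let $f(x)=\sum_{i=0}^{m-1}f_ix^{[i]}$ be a $q$-polynomial over $\mathbb{F}_{q^m}$, and let $F=(F_0,\dots,F_{m-1})^T\in\mathbb{F}_{q^m}^m$ be such that $[F]_{\mathcal{B}}=[f(x)]_{\mathcal{A}}^{\mathcal{B}}$. Writing $F(x)=\sum_{j=0}^{m-1}F_jx^{[j]}$, we have $f_i=F(\alpha'_i)$ for $i=0,\dots,m-1$. In particular, for any ordered basis $\Theta$ of $\mathbb{F}_{q^m}$ over $\mathbb{F}_q$, $[f]_\Theta=[F(x)]_{\mathcal{A}'}^{\Theta}$, where $f=(f_0,\dots,f_{m-1})^T$.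
   Context: $x^{[i]}$ denotes $x^{q^i}$. A normal basis is a basis of the form $\{\alpha^{[0]},\dots,\alpha^{[m-1]}\}$. The dual basis $\{\alpha'_j\}$ of a basis $\{\alpha_i\}$ satisfies $\mathrm{Tr}(\alpha_i\alpha'_j)=\delta_{ij}$, where $\mathrm{Tr}(x)=\sum_{\ell=0}^{m-1}x^{[\ell]}$. For $a\in\mathbb{F}_{q^m}$ and an ordered basis $\mathcal{B}=\{\beta_0,\dots,\beta_{m-1}\}$, $[a]_{\mathcal{B}}\in\mathbb{F}_q^{1\times m}$ is the row vector of coordinates of $a$ with respect to $\mathcal{B}$; for a vector $v\in\mathbb{F}_{q^m}^m$, $[v]_{\mathcal{B}}\in\mathbb{F}_q^{m\times m}$ is the matrix whose $i$th row is $[v_i]_{\mathcal{B}}$. For an $\mathbb{F}_q$-linear map $T$ on $\mathbb{F}_{q^m}$ and ordered bases $\mathcal{A}=\{\alpha_i\}$, $\mathcal{B}=\{\beta_j\}$, $[T]_{\mathcal{A}}^{\mathcal{B}}$ is the matrix over $\mathbb{F}_q$ with $T(\alpha_i)=\sum_j([T]_{\mathcal{A}}^{\mathcal{B}})_{ij}\beta_j$. A $q$-polynomial is viewed as the linear map given by evaluation. Indices start at 0. *)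

(* Defs.v *)
From HB Require Import structures.
From mathcomp Require Import all_boot all_order all_algebra all_field.
Set Implicit Arguments. Unset Strict Implicit. Unset Printing Implicit Defensive.
Import GRing.Theory.
Local Open Scope ring_scope.

(* F = F_q (a finite field, q = #|F|), L = F_{q^m} a finite extension of F. *)
Section Defs.
Variables (F : finFieldType) (L : fieldExtType F).

Definition frobq (i : nat) (x : L) : L := x ^+ (#|F| ^ i).

Definition qpolyev (m : nat) (c : 'I_m -> L) (x : L) : L :=
  \sum_(i < m) c i * frobq i x.

Definition trace (m : nat) (x : L) : L := \sum_(l < m) frobq l x.

Definition normal_tuple (m : nat) (alpha : L) : m.-tuple L :=
  [tuple frobq i alpha | i < m].

Definition coordmx (m : nat) (v : 'I_m -> L) (B : m.-tuple L) : 'M[F]_m :=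
  \matrix_(i, j) coord B j (v i).

(* [T]_A^B : T(alpha_i) = sum_j ([T]_A^B)_{ij} beta_j *)
Definition linmx (m : nat) (T : L -> L) (A B : m.-tuple L) : 'M[F]_m :=
  \matrix_(i, j) coord B j (T (tnth A i)).
End Defs.

(* Main.v *)
Require Import Defs.
From HB Require Import structures.
From mathcomp Require Import all_boot all_order all_algebra all_field.
Local Open Scope ring_scope.
Import GRing.Theory.

Theorem lemma2 (F : finFieldType) (L : fieldExtType F) (m : nat)
  (hm : (0 < m)%N) (hdim : \dim {:L} = m)
  (alpha : L) (hA : basis_of fullv (normal_tuple m alpha))
  (A' : m.-tuple L) (hA' : basis_of fullv A')
  (hdual : forall i j : 'I_m,
     trace m (tnth (normal_tuple m alpha) i * tnth A' j) = (i == j)%:R)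
  (B : m.-tuple L) (hB : basis_of fullv B)
  (f : 'I_m -> L) (Fv : 'I_m -> L)
  (hF : coordmx Fv B = linmx (qpolyev f) (normal_tuple m alpha) B) :
  (forall i : 'I_m, f i = qpolyev Fv (tnth A' i)) /\
  (forall Theta : m.-tuple L, basis_of fullv Theta ->
     coordmx f Theta = linmx (qpolyev Fv) A' Theta).
Proof.
have HF : forall i, Fv i = qpolyev f (frobq i alpha).
  move=> i.
  rewrite (coord_basis hB (memvf (Fv i))) (coord_basis hB (memvf (qpolyev f _))).
  apply: eq_bigr => j _.
  have := congr1 (fun M : 'M[F]_m => M i j) hF; rewrite !mxE tnth_mktuple => ->.
  by [].
have P1 : forall i : 'I_m, f i = qpolyev Fv (tnth A' i).
  move=> i; rewrite /qpolyev.
  under eq_bigr => j _ do rewrite HF /qpolyev mulr_suml.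
  rewrite exchange_big /=.
  rewrite (bigD1 i) //= [X in _ + X]big1 ?addr0.
    have := hdual i i; rewrite eqxx /= mulr1n => H1.
    rewrite -[LHS]mulr1 -H1 /trace mulr_sumr.
    apply: eq_bigr => j _; rewrite tnth_mktuple -mulrA; congr (_ * _).
    by rewrite /frobq exprMn -!exprM mulnC.
  move=> k hk; have := hdual k i; rewrite (negbTE hk) /= mulr0n => H0.
  transitivity (f k * trace m (tnth (normal_tuple m alpha) k * tnth A' i));
    last by rewrite H0 mulr0.
  rewrite /trace mulr_sumr.
  apply: eq_bigr => j _; rewrite tnth_mktuple -mulrA; congr (_ * _).
  by rewrite /frobq exprMn -!exprM mulnC.
split => // Theta _.
by apply/matrixP => i j; rewrite !mxE -P1.
Qed.
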